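(* For every field $K$ and every integer $n\geq 1$, $\mathrm{card}(\widetilde{K}_n)\leq (n+1)^{n^2+n+1}$. Consequently $\widetilde{K}$ is countable.
   Context: Let $K$ be a field. For $r\in K$, a finite set $A(r)$ with $\{r\}\subseteq A(r)\subseteq K$ is called adequate for $r$ if every mapping $f:A(r)\to K$ satisfying (1) if $1\in A(r)$ then $f(1)=1$; (2) if $a,b\in A(r)$ and $a+b\in A(r)$ then $f(a+b)=f(a)+f(b)$; (3) if $a,b\in A(r)$ and $a\cdot b\in A(r)$ then $f(a\cdot b)=f(a)\cdot f(b)$, also satisfies $f(r)=r$. $\widetilde{K}$ denotes the set of all $r\in K$ for which some finite set adequate for $r$ exists. For $n\ge1$, $\widetilde{K}_n$ denotes the set of all $r\in K$ for which there exists a set $A(r)$ adequate for $r$ with $\mathrm{card}(A(r))\leq n$; thus $\widetilde{K}=\bigcup_{n\ge1}\widetilde{K}_n$. *)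

(* Defs.v *)
From HB Require Import structures.
From mathcomp Require Import all_boot all_algebra.
From mathcomp Require Import finmap.
Set Implicit Arguments. Unset Strict Implicit. Unset Printing Implicit Defensive.
Import GRing.Theory.
Local Open Scope ring_scope.
Local Open Scope fset_scope.

(* A finite set A (an fset of K) is adequate for r: r \in A, and every map
   f : A -> K (represented as f : K -> K, only its values on A matter)
   satisfying (1)-(3) fixes r. *)
Definition adequate (K : fieldType) (r : K) (A : {fset K}) : Prop :=
  r \in A /\
  forall f : K -> K,
    ((1:K) \in A -> f 1 = 1) ->
    (forall a b, a \in A -> b \in A -> (a + b)%R \in A -> f (a + b)%R = (f a + f b)%R) ->
    (forall a b, a \in A -> b \in A -> (a * b)%R \in A -> f (a * b)%R = (f a * f b)%R) ->
    f r = r.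

Definition Ktilde (K : fieldType) (r : K) : Prop :=
  exists A : {fset K}, adequate r A.

Definition Ktilde_n (K : fieldType) (n : nat) (r : K) : Prop :=
  exists A : {fset K}, (#|` A| <= n)%N /\ adequate r A.

(* Main.v *)
Require Import Defs.
From HB Require Import structures.
From mathcomp Require Import all_boot all_algebra.
From mathcomp Require Import finmap.
From Stdlib Require Import ClassicalEpsilon.

Set Implicit Arguments. Unset Strict Implicit. Unset Printing Implicit Defensive.
Import GRing.Theory.
Section Codes.
Local Open Scope ring_scope.
Variable K : fieldType.
Variable n : nat.

Definition ix (a : seq K) (x : K) : 'I_n.+1 :=
  inord (if x \in a then index x a else n).

Lemma ixE a x : (size a <= n)%N ->
  nat_of_ord (ix a x) = if x \in a then index x a else n.
Proof.
move=> Ha; rewrite /ix inordK //; case: ifP => Hx //.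
by rewrite ltnS; apply: leq_trans Ha; rewrite ltnW // index_mem.
Qed.

Lemma ix_transfer a b u v : (size a <= n)%N -> (size b <= n)%N ->
  ix a u = ix b v -> u \in a -> nth 0 b (index u a) = v.
Proof.
move=> Ha Hb E Hu.
have := congr1 (@nat_of_ord _) E; rewrite !ixE // Hu.
case: ifP => Hv.
  by move=> ->; rewrite nth_index.
move=> Hi; have := index_mem u a; rewrite Hu Hi => H.
by have := leq_trans H Ha; rewrite ltnn.
Qed.

Definition CT := ({ffun 'I_n * 'I_n -> 'I_n.+1} * {ffun 'I_n -> 'I_n.+1} * 'I_n.+1)%type.

Definition code (a : seq K) : CT :=
  ([ffun p : 'I_n * 'I_n => if (p.1 <= p.2)%N
       then ix a (nth 0 a p.1 + nth 0 a p.2)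
       else ix a (nth 0 a p.2 * nth 0 a p.1)],
   [ffun i : 'I_n => ix a (nth 0 a i * nth 0 a i)],
   ix a 1).

Lemma card_CT : #|{: CT}| = (n.+1 ^ (n ^ 2 + n + 1))%N.
Proof.
rewrite !card_prod !card_ffun !card_prod !card_ord.
by rewrite -mulnn !expnD expn1.
Qed.

Lemma code_add a b (i j : 'I_n) : code a = code b ->
  ix a (nth 0 a i + nth 0 a j) = ix b (nth 0 b i + nth 0 b j).
Proof.
move=> E; have E1 := congr1 (fun c : CT => c.1.1 (i, j)) E.
have E2 := congr1 (fun c : CT => c.1.1 (j, i)) E.
move: E1 E2; rewrite /= !ffunE /=.
case: (leqP i j) => Hij.
  by move=> ->.
rewrite (ltnW Hij) => _ E'.
by rewrite addrC [nth 0 b i + _]addrC.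
Qed.

Lemma code_mul a b (i j : 'I_n) : code a = code b ->
  ix a (nth 0 a i * nth 0 a j) = ix b (nth 0 b i * nth 0 b j).
Proof.
move=> E; have E1 := congr1 (fun c : CT => c.1.1 (i, j)) E.
have E2 := congr1 (fun c : CT => c.1.1 (j, i)) E.
have E3 := congr1 (fun c : CT => c.1.2 j) E.
move: E1 E2; rewrite /= !ffunE /=.
case: (ltngtP i j) => Hij.
- by move=> _ ->.
- by move=> H _; rewrite mulrC [nth 0 b i * _]mulrC.
- have -> : i = j by apply: val_inj.
  by move=> _ _; move: E3; rewrite /= !ffunE.
Qed.

Lemma code_key (r r' : K) (A : {fset K}) a b :
  (size (r :: a) <= n)%N -> (size (r' :: b) <= n)%N ->
  adequate r A -> (forall x, x \in A -> x \in r :: a) ->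
  code (r :: a) = code (r' :: b) -> r' = r.
Proof.
set sa := r :: a; set sb := r' :: b.
move=> Ha Hb [HrA Had] Hsub Hc.
have <- : nth 0 sb (index r sa) = r'.
  by rewrite /sa /= eqxx.
apply: (Had (fun x => nth 0 sb (index x sa))).
- move=> H1; apply: ix_transfer => //; last exact: Hsub.
  by have := congr1 (fun c : CT => c.2) Hc.
- move=> x y Hx Hy Hxy.
  have Hix : (index x sa < n)%N by apply: leq_trans Ha; rewrite index_mem Hsub.
  have Hiy : (index y sa < n)%N by apply: leq_trans Ha; rewrite index_mem Hsub.
  have := code_add (Ordinal Hix) (Ordinal Hiy) Hc; rewrite /= !nth_index ?Hsub //.
  by move=> E; exact: (ix_transfer Ha Hb E (Hsub _ Hxy)).
- move=> x y Hx Hy Hxy.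
  have Hix : (index x sa < n)%N by apply: leq_trans Ha; rewrite index_mem Hsub.
  have Hiy : (index y sa < n)%N by apply: leq_trans Ha; rewrite index_mem Hsub.
  have := code_mul (Ordinal Hix) (Ordinal Hiy) Hc; rewrite /= !nth_index ?Hsub //.
  by move=> E; exact: (ix_transfer Ha Hb E (Hsub _ Hxy)).
Qed.

Definition chA (r : K) : {fset K} :=
  epsilon (inhabits fset0) (fun A => ((#|` A|)%fset <= n)%N /\ adequate r A).

Definition codeK (r : K) : CT := code (r :: rem r (chA r)).

Lemma chA_spec r : Ktilde_n n r -> ((#|` chA r|)%fset <= n)%N /\ adequate r (chA r).
Proof. by move=> H; exact: (epsilon_spec (inhabits fset0) (fun A : {fset K} => ((#|` A|)%fset <= n)%N /\ adequate r A) H). Qed.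

Lemma chA_size r : Ktilde_n n r -> (size (r :: rem r (chA r)) <= n)%N.
Proof.
move=> /chA_spec [Hs [Hr _]].
rewrite /= size_rem // prednK //.
  by rewrite cardfs_gt0; apply/eqP => E; move: Hr; rewrite E inE.
Qed.

Lemma chA_sub r x : Ktilde_n n r -> x \in chA r -> x \in r :: rem r (chA r).
Proof.
move=> _ Hx; rewrite inE (mem_rem_uniq _ (fset_uniq _)) inE /= Hx andbT.
by case: eqP.
Qed.

Lemma codeK_inj x y : Ktilde_n n x -> Ktilde_n n y -> codeK x = codeK y -> x = y.
Proof.
move=> Hx Hy E; apply: esym.
apply: (@code_key x y (chA x)) E.
- exact: chA_size.
- exact: chA_size.
- by case: (chA_spec Hx).
- by move=> z; apply: chA_sub.
Qed.

End Codes.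

Theorem theorem2 (K : fieldType) :
  (forall n : nat, (1 <= n)%N ->
     forall s : seq K, uniq s -> (forall r, r \in s -> Ktilde_n n r) ->
       (size s <= (n.+1) ^ (n ^ 2 + n + 1))%N)
  /\
  (exists g : K -> nat,
     forall x y : K, Ktilde x -> Ktilde y -> g x = g y -> x = y).
Proof.
split.
  move=> n _ s Us Hs.
  have Um : uniq (map (@codeK K n) s).
    rewrite map_inj_in_uniq // => x y Hx Hy; apply: codeK_inj; exact: Hs.
  rewrite -(size_map (@codeK K n)) -(card_uniqP Um) -card_CT.
  exact: max_card.
pose nx (x : K) := epsilon (inhabits 0%N) (fun m => Ktilde_n m x).
exists (fun x => choice.pickle (nx x, choice.pickle (codeK (nx x) x))).
move=> x y Hx Hy /(pcan_inj choice.pickleK) [E1 E2].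
have Knx : forall z, Ktilde z -> Ktilde_n (nx z) z.
  move=> z [A HA]; exact: (epsilon_spec (inhabits 0%N) (fun m => Ktilde_n m z) (ex_intro _ (#|` A|)%fset (ex_intro _ A (conj (leqnn _) HA)))).  
move: E2; rewrite E1 => /(pcan_inj choice.pickleK) E2.
apply: (codeK_inj _ _ E2).
  by rewrite -E1; apply: Knx.
exact: Knx.
Qed.
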